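(* For a commutative ring $R$, the following are equivalent: (1) $R$ is uniquely weakly nil clean; (2) $R/Nil(R)$ is semi Boolean and idempotents can be lifted uniquely weakly modulo $Nil(R)$.
   Context: All rings are associative with identity; $Nil(R)$ is the set (here, ideal) of nilpotent elements and $Idem(R)$ the set of idempotents. $R$ is uniquely weakly nil clean if for every $x\in R$ there exists a unique $e\in Idem(R)$ with $x-e\in Nil(R)$ or $x+e\in Nil(R)$. A ring $A$ is semi Boolean if for every $x\in A$, $x^2=x$ or $x^2=-x$. Idempotents can be lifted uniquely weakly modulo an ideal $I$ if for every $x\in R$ with $x^2-x\in I$ there exists a unique $e\in Idem(R)$ with $x-e\in I$ or $x+e\in I$. *)

(* Defs.v *)
From HB Require Import structures.
From mathcomp Require Import all_boot all_order all_algebra.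
From Stdlib Require Import ClassicalEpsilon.
Set Implicit Arguments. Unset Strict Implicit. Unset Printing Implicit Defensive.
Import GRing.Theory.
Local Open Scope ring_scope.

Definition nilpotent (R : pzRingType) (x : R) : Prop := exists n : nat, x ^+ n = 0.

Definition idempotent (R : pzRingType) (e : R) : Prop := e * e = e.

Definition nilb (R : pzRingType) : pred R :=
  fun x => if excluded_middle_informative (nilpotent x) then true else false.
Arguments nilb : clear implicits.

Lemma nilbP (R : pzRingType) (x : R) : reflect (nilpotent x) (nilb R x).
Proof.
rewrite /nilb; case: excluded_middle_informative => h; [exact: ReflectT|exact: ReflectF].
Qed.

Lemma nilb_idealr_closed (R : comNzRingType) : idealr_closed (nilb R).
Proof.
split.
- by apply/nilbP; exists 1%N; rewrite expr1.
- apply/nilbP => -[n]; rewrite expr1n; exact/eqP/oner_neq0.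
- move=> a u v /nilbP [m hu] /nilbP [k hv]; apply/nilbP; exists (m + k)%N.
  rewrite exprDn big1 // => i _.
  have [lt_ik|le_ki] := ltnP i k.
  + have hm : (m <= m + k - i)%N.
      by rewrite -addnBA ?leq_addr // ltnW.
    by rewrite exprMn -(subnKC hm) [u ^+ _]exprD hu mul0r mulr0 mul0r mul0rn.
  + by rewrite -(subnKC le_ki) exprD hv mul0r mulr0 mul0rn.
Qed.

HB.instance Definition _ (R : comNzRingType) :=
  isIdealr.Build R (nilb R) (nilb_idealr_closed R).

Definition NilIdeal (R : comNzRingType) : idealr R := Idealr.clone R (nilb R) _.

Notation "R /Nil" := ({ideal_quot (NilIdeal R)}) (at level 2).

Definition uniquely_weakly_nil_clean (R : pzRingType) : Prop :=
  forall x : R, exists! e : R,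
    idempotent e /\ (nilpotent (x - e) \/ nilpotent (x + e)).

Definition semi_Boolean (A : pzRingType) : Prop :=
  forall x : A, x ^+ 2 = x \/ x ^+ 2 = - x.

Definition idempotents_lift_uniquely_weakly (R : pzRingType) (I : pred R) : Prop :=
  forall x : R, x ^+ 2 - x \in I ->
    exists! e : R, idempotent e /\ (x - e \in I \/ x + e \in I).

(* Main.v *)
Require Import Defs.
From HB Require Import structures.
From mathcomp Require Import all_boot all_order all_algebra.
Import GRing.Theory.
Local Open Scope ring_scope.
Local Open Scope quotient_scope.

Lemma piE' (R : comNzRingType) (x y : R) :
  (\pi_(R /Nil) x = \pi y) <-> (x - y \in nilb R).
Proof.
have := @Quotient.idealrBE R (NilIdeal R) x y.
move=> ->. by split; [move=> h; apply/eqP|move/eqP].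
Qed.

Lemma piX (R : comNzRingType) (x : R) :
  (\pi_(R /Nil) x) ^+ 2 = \pi_(R /Nil) (x ^+ 2).
Proof. by rewrite rmorphXn. Qed.
Lemma piN (R : comNzRingType) (x : R) :
  - (\pi_(R /Nil) x) = \pi_(R /Nil) (- x).
Proof. by rewrite rmorphN. Qed.

Theorem mainTheorem9 (R : comNzRingType) :
  uniquely_weakly_nil_clean R <->
  semi_Boolean (R /Nil) /\ idempotents_lift_uniquely_weakly (nilb R).
Proof.
have E : forall x e : R, (nilpotent (x - e) \/ nilpotent (x + e)) <->
   (x - e \in nilb R \/ x + e \in nilb R).
  by move=> x e; split=> -[h|h]; [left|right|left|right]; apply/nilbP.
split.
- move=> H; split.
  + move=> q; elim/quotW: q => x.
    have [e [[ide he] _]] := H x.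
    have ie : \pi_(R /Nil) (e ^+ 2) = \pi_(R /Nil) e by rewrite expr2 ide.
    case: (proj1 (E x e) he) => h.
    * left; have hxe : \pi_(R /Nil) x = \pi_(R /Nil) e by apply/piE'.
      by rewrite hxe piX ie.
    * right; have -> : \pi_(R /Nil) x = - \pi_(R /Nil) e.
        by rewrite piN; apply/piE'; rewrite opprK.
      by rewrite sqrrN piX ie opprK.
  + move=> x _; have [e [[ide he] U]] := H x.
    exists e; split; first by split=> //; apply/E.
    by move=> f [idf hf]; apply: U; split=> //; apply/E.
- move=> [SB L] x.
  case: (SB (\pi_(R /Nil) x)) => h.
  + have hx : x ^+ 2 - x \in nilb R by apply/piE'; rewrite -piX.
    have [e [[ide he] U]] := L x hx.
    exists e; split; first by split=> //; apply/E.
    by move=> f [idf hf]; apply: U; split=> //; apply/E.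
  + have hx : (- x) ^+ 2 - (- x) \in nilb R.
      by apply/piE'; rewrite sqrrN -piX -piN.
    have [e [[ide he] U]] := L (- x) hx.
    have F : forall f : R, (- x - f \in nilb R \/ - x + f \in nilb R) <->
        (x - f \in nilb R \/ x + f \in nilb R).
      move=> f.
      have e1 : (- x - f \in nilb R) = (x + f \in nilb R)
        by rewrite -opprD rpredN.
      have e2 : (- x + f \in nilb R) = (x - f \in nilb R)
        by rewrite -rpredN opprD opprK.
      by rewrite e1 e2; tauto.
    exists e; split; first by split=> //; apply/E/F.
    by move=> f [idf hf]; apply: U; split=> //; apply/F/E.
Qed.
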